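(* Let $\mathcal F$ be a left $\mathcal D$-module. Then the pairing $\langle\sum_{u\in M}A_ux^{-u},\sum_{u\in M}B_ux^u\rangle=\sum_uB_uA_u$ induces an isomorphism $\mathcal K(\mathcal F)\cong\mathrm{Hom}_{\mathcal D}(\mathcal W,\mathcal F)$.
   Context: Let $A=\{\mathbf a_1,\dots,\mathbf a_m\}\subseteq\mathbb Z^n$ be linearly independent over $\mathbb R$, $\mathbf a_0\in\mathbb Z^n$, and $\ell_0,\dots,\ell_m$ positive integers with gcd $1$, $\ell_0\mathbf a_0=\sum_{j=1}^m\ell_j\mathbf a_j$, $\ell_0=\sum_{j=1}^m\ell_j$. Write $\mathbf a_j=(a_{1j},\dots,a_{nj})$ for $j=0,\dots,m$. Let $f_\lambda=\sum_{j=1}^m\ell_jx^{\mathbf a_j}-\ell_0\lambda x^{\mathbf a_0}$. Let $V$ be the real span of $A$, $V_{\mathbb Z}=V\cap\mathbb Z^n$, $C(A)$ the real cone generated by $A$, $M=V_{\mathbb Z}\cap C(A)$. Let $S$ be the $\mathbb C[\lambda]$-span of $\{x^u:u\in M\}$, $D_i=x_i\partial/\partial x_i+x_i\partial f_\lambda/\partial x_i$ ($i=1,\dots,n$), $D_\lambda=\partial/\partial\lambda-\ell_0x^{\mathbf a_0}$, $\mathcal D=\mathbb C[\lambda]\langle\partial_\lambda\rangle$, and $\mathcal W=S/\sum_iD_iS$, a left $\mathcal D$-module with $\partial_\lambda$ acting as $D_\lambda$. For a left $\mathcal D$-module $\mathcal F$, let $R(\mathcal F)$ be the set of formal sums $\xi=\sum_{u\in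 M}A_ux^{-u}$ with $A_u\in\mathcal F$, and define $D_i^*(\xi)=\sum_{v\in M}\big(v_iA_v-\ell_0a_{i0}\lambda A_{v+\mathbf a_0}+\sum_{j=1}^m\ell_ja_{ij}A_{v+\mathbf a_j}\big)x^{-v}$ (this is $\gamma_-\circ(-x_i\partial/\partial x_i-\ell_0a_{i0}\lambda x^{\mathbf a_0}+\sum_j\ell_ja_{ij}x^{\mathbf a_j})$, where $\gamma_-$ discards monomials $x^{-u}$ with $u\notin M$). Let $\mathcal K(\mathcal F)$ be the set of $\xi=\sum_{u\in M}A_ux^{-u}\in R(\mathcal F)$ with $D_i^*(\xi)=0$ for $i=1,\dots,n$ and $\partial_\lambda(A_u)=-\ell_0A_{u+\mathbf a_0}$ for all $u\in M$. *)

(* Defs.v *)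
From HB Require Import structures.
From mathcomp Require Import all_boot all_order all_algebra.
From mathcomp Require Import finmap.
From mathcomp Require Import monalg.
From mathcomp Require Import Rstruct complex.
From Stdlib Require Import ClassicalEpsilon.

Set Implicit Arguments.
Unset Strict Implicit.
Unset Printing Implicit Defensive.

Import Order.TTheory GRing.Theory Num.Theory.
Local Open Scope ring_scope.

Definition RR : rcfType := Rdefinitions.R.
Definition CC : fieldType := (RR[i])%type.

Notation Cl := {poly CC}.

(* Vectors in Z^n are row vectors 'rV[int]_n; the family A = {a_1..a_m}
   is a : 'I_m -> 'rV[int]_n, so a_{ij} = a j 0 i.                       *)

Definition toR (n : nat) (u : 'rV[int]_n) : 'rV[RR]_n := map_mx intr u.

Definition in_span (n m : nat) (a : 'I_m -> 'rV[int]_n) (u : 'rV[int]_n) : Prop :=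
  exists c : 'I_m -> RR, toR u = \sum_(j < m) c j *: toR (a j).

Definition in_cone (n m : nat) (a : 'I_m -> 'rV[int]_n) (u : 'rV[int]_n) : Prop :=
  exists c : 'I_m -> RR, (forall j, 0 <= c j) /\ toR u = \sum_(j < m) c j *: toR (a j).

(* M = V_Z \cap C(A)  (u integral is automatic from the type) *)
Definition inM (n m : nat) (a : 'I_m -> 'rV[int]_n) (u : 'rV[int]_n) : Prop :=
  in_span a u /\ in_cone a u.

Definition inMb (n m : nat) (a : 'I_m -> 'rV[int]_n) (u : 'rV[int]_n) : bool :=
  if excluded_middle_informative (inM a u) then true else false.

Definition Mt (n m : nat) (a : 'I_m -> 'rV[int]_n) : Type :=
  {u : 'rV[int]_n | inMb a u}.

(* v |-> v + w inside M (defaults to v if v + w were not in M; for the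
   shifts used below, v + a_j and v + a_0, one always stays in M). *)
Definition shiftM (n m : nat) (a : 'I_m -> 'rV[int]_n) (v : Mt a)
  (w : 'rV[int]_n) : Mt a := insubd v (val v + w).

(* S = the C[lambda]-span of {x^u : u in M}: the free C[lambda]-module on M *)
Definition S (n m : nat) (a : 'I_m -> 'rV[int]_n) : Type := {malg Cl[Mt a]}.

(* D_i applied to the basis element x^u:
   x_i d/dx_i (x^u) + x_i (d f_lambda / d x_i) x^u
   = u_i x^u + sum_j l_j a_{ij} x^{u+a_j} - l_0 a_{i0} lambda x^{u+a_0} *)
Definition Dbasis (n m : nat) (a : 'I_m -> 'rV[int]_n) (a0 : 'rV[int]_n)
  (l : 'I_m -> nat) (l0 : nat) (i : 'I_n) (u : Mt a) : S a :=
  ((val u) 0 i)%:~R *: << u >>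
  + \sum_(j < m) ((l j)%:R * (a j 0 i)%:~R) *: << shiftM u (a j) >>
  - (l0%:R * (a0 0 i)%:~R * 'X) *: << shiftM u a0 >>.

Definition Dop (n m : nat) (a : 'I_m -> 'rV[int]_n) (a0 : 'rV[int]_n)
  (l : 'I_m -> nat) (l0 : nat) (i : 'I_n) (s : S a) : S a :=
  \sum_(u <- msupp s) s@_u *: Dbasis a0 l l0 i u.

(* D_lambda = d/dlambda - l_0 x^{a_0} on S *)
Definition Dlam (n m : nat) (a : 'I_m -> 'rV[int]_n) (a0 : 'rV[int]_n)
  (l0 : nat) (s : S a) : S a :=
  \sum_(u <- msupp s)
     ((s@_u)^`() *: << u >> - (l0%:R * s@_u) *: << shiftM u a0 >>).

(* Left D-modules, D = C[lambda]<d_lambda>: a C[lambda]-module F together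
   with the action dF of d_lambda, additive and satisfying the Weyl
   relation d_lambda p = p d_lambda + p' (Leibniz rule). *)
Definition isDmod (F : lmodType Cl) (dF : F -> F) : Prop :=
  (forall f g : F, dF (f + g) = dF f + dF g) /\
  (forall (p : Cl) (f : F), dF (p *: f) = p^`() *: f + p *: dF f).

(* R(F): formal sums xi = sum_{u in M} A_u x^{-u}, i.e. families M -> F *)
Definition RF (n m : nat) (a : 'I_m -> 'rV[int]_n) (F : lmodType Cl) : Type :=
  Mt a -> F.

Definition Dstar (n m : nat) (a : 'I_m -> 'rV[int]_n) (a0 : 'rV[int]_n)
  (l : 'I_m -> nat) (l0 : nat) (F : lmodType Cl) (i : 'I_n)
  (xi : RF a F) : RF a F :=
  fun v => ((val v) 0 i)%:~R *: xi v
           - (l0%:R * (a0 0 i)%:~R * 'X) *: xi (shiftM v a0)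
           + \sum_(j < m) ((l j)%:R * (a j 0 i)%:~R) *: xi (shiftM v (a j)).

Definition inK (n m : nat) (a : 'I_m -> 'rV[int]_n) (a0 : 'rV[int]_n)
  (l : 'I_m -> nat) (l0 : nat) (F : lmodType Cl) (dF : F -> F)
  (xi : RF a F) : Prop :=
  (forall i v, Dstar a0 l l0 i xi v = 0) /\
  (forall u, dF (xi u) = - (l0%:R *: xi (shiftM u a0))).

Definition pairing (n m : nat) (a : 'I_m -> 'rV[int]_n) (F : lmodType Cl)
  (xi : RF a F) (s : S a) : F :=
  \sum_(u <- msupp s) s@_u *: xi u.

(* Hom_D(W, F), W = S / sum_i D_i S, via the universal property of the
   quotient: C[lambda]-linear maps S -> F vanishing on every D_i S and
   intertwining D_lambda (acting on S, hence on W) with d_lambda on F. *)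
Definition isDHom (n m : nat) (a : 'I_m -> 'rV[int]_n) (a0 : 'rV[int]_n)
  (l : 'I_m -> nat) (l0 : nat) (F : lmodType Cl) (dF : F -> F)
  (phi : S a -> F) : Prop :=
  [/\ (forall (p : Cl) (s t : S a), phi (p *: s + t) = p *: phi s + phi t),
      (forall i (s : S a), phi (Dop a0 l l0 i s) = 0) &
      (forall s : S a, phi (Dlam a0 l0 s) = dF (phi s))].

(* Main.v *)
Require Import Defs.
From HB Require Import structures.
From mathcomp Require Import all_boot all_order all_algebra.
From mathcomp Require Import finmap monalg Rstruct complex.

Import GRing.Theory Num.Theory.
Local Open Scope ring_scope.

Definition linS (K : choiceType) (F : lmodType Cl) (phi : {malg Cl[K]} -> F) :=
  forall (p : Cl) (s t : {malg Cl[K]}), phi (p *: s + t) = p *: phi s + phi t.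

Definition pair (K : choiceType) (F : lmodType Cl) (xi : K -> F) (s : {malg Cl[K]}) : F :=
  \sum_(u <- msupp s) s@_u *: xi u.

Arguments linS {K F} phi.
Arguments pair {K F} xi s.
Section H.
Context (K : choiceType) (F : lmodType Cl).
Implicit Types (phi : {malg Cl[K]} -> F) (s t : {malg Cl[K]}).

Lemma lin0 phi : linS phi -> phi 0 = 0.
Proof. move=> h; have := h 1 0 0; rewrite !scale1r addr0.
by move/(congr1 (fun x => x - phi 0)); rewrite subrr addrK => <-. Qed.
Lemma linD phi : linS phi -> forall s t, phi (s + t) = phi s + phi t.
Proof. by move=> h s t; have := h 1 s t; rewrite !scale1r. Qed.
Lemma linZ phi : linS phi -> forall p s, phi (p *: s) = p *: phi s.
Proof. by move=> h p s; rewrite -[_ *: s]addr0 h lin0 // addr0. Qed.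
Lemma linB phi : linS phi -> forall s t, phi (s - t) = phi s - phi t.
Proof. move=> h s t; have e : s - t = (-1) *: t + s by rewrite scaleN1r addrC.
by rewrite e h scaleN1r addrC. Qed.
Lemma lin_sum phi (I : Type) (r : seq I) (g : I -> {malg Cl[K]}) : linS phi ->
  phi (\sum_(k <- r) g k) = \sum_(k <- r) phi (g k).
Proof. move=> h; elim: r => [|x r IH]; first by rewrite !big_nil lin0.
by rewrite !big_cons linD // IH. Qed.

Lemma malgU_scale (c : Cl) (k : K) : << c *g k >> = c *: (<< k >> : {malg Cl[K]}).
Proof. apply/malgP => k'; rewrite mcoeffZ !mcoeffU; case: eqP => _;
  by rewrite ?mulr1 ?mulr0. Qed.

Lemma msuppU1' (k : K) : msupp (<< k >> : {malg Cl[K]}) = [fset k]%fset.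
Proof. by rewrite msuppU oner_eq0. Qed.

Lemma pairEw (xi : K -> F) {s} {d : {fset K}} : (msupp s `<=` d)%fset ->
  pair xi s = \sum_(k <- d) s@_k *: xi k.
Proof. move=> le; rewrite /pair (big_fset_incl _ le) //= => x _ /mcoeff_outdom ->.
by rewrite scale0r. Qed.

Lemma pair_lin (xi : K -> F) : linS (pair xi).
Proof.
move=> p s t.
have le1 : (msupp s `<=` msupp s `|` msupp t)%fset by apply: fsubsetUl.
have le2 : (msupp t `<=` msupp s `|` msupp t)%fset by apply: fsubsetUr.
have le3 : (msupp (p *: s + t) `<=` msupp s `|` msupp t)%fset.
  apply: fsubset_trans (msuppD_le _ _) _; apply: fsetSU; exact: msuppZ_le.
rewrite (pairEw _ le1) (pairEw _ le2) (pairEw _ le3) scaler_sumr -big_split /=.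
by apply: eq_bigr => k _; rewrite mcoeffD mcoeffZ scalerDl scalerA.
Qed.

Lemma pairU (xi : K -> F) (k : K) : pair xi << k >> = xi k.
Proof. by rewrite /pair msuppU1' big_seq_fset1 mcoeffUU scale1r. Qed.

Lemma lin_pair phi s : linS phi -> phi s = pair (fun u => phi << u >>) s.
Proof.
move=> h; rewrite {1}(monalgE s) lin_sum //; apply: eq_bigr => k _.
by rewrite malgU_scale linZ.
Qed.
End H.
Arguments pair_lin {K F} xi.
Arguments pairU {K F} xi k.
Lemma gen_basis (K : choiceType) (F : lmodType Cl) (phi : {malg Cl[K]} -> F) (xi : K -> F)
  (m : nat) (c c0 : Cl) (k k0 : K) (cs : 'I_m -> Cl) (ks : 'I_m -> K) :
  linS phi -> (forall u, phi << u >> = xi u) ->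
  phi (c *: << k >> + \sum_(j < m) cs j *: << ks j >> - c0 *: << k0 >>)
  = c *: xi k - c0 *: xi k0 + \sum_(j < m) cs j *: xi (ks j).
Proof.
move=> h hx; rewrite linB // linD // (@linZ _ _ _ h c) (@linZ _ _ _ h c0) !hx addrAC.
congr (_ + _); rewrite lin_sum //.
by apply: eq_bigr => j _; rewrite linZ // hx.
Qed.

Lemma Dbasis_phi (n m : nat) (a : 'I_m -> 'rV[int]_n) (F : lmodType Cl) (phi : S a -> F)
  (xi : RF a F) a0 l l0 i v : linS phi -> (forall u, phi << u >> = xi u) ->
  phi (Dbasis a0 l l0 i v) = Dstar a0 l l0 i xi v.
Proof.
move=> h hx; rewrite /Dbasis /Dstar. have := @gen_basis _ _ phi xi m (((val v) 0 i)%:~R) (l0%:R * (a0 0 i)%:~R * 'X) v (shiftM v a0) (fun j => (l j)%:R * (a j 0 i)%:~R) (fun j => shiftM v (a j)) h hx. move=> e. rewrite /Dbasis /Dstar. exact: e. Qed.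


Section G.
Context (K : choiceType) (F : lmodType Cl).

Lemma G1 (phi : {malg Cl[K]} -> F) (r : seq K) (cs : K -> Cl) (g : K -> {malg Cl[K]}) :
  linS phi -> (forall u, phi (g u) = 0) -> phi (\sum_(u <- r) cs u *: g u) = 0.
Proof.
move=> h h0; rewrite lin_sum //; apply: big1 => u _.
by rewrite (@linZ _ _ _ h) h0 scaler0.
Qed.

Lemma G2 (dF : F -> F) (xi : K -> F) (c0 : Cl) (sh : K -> K) (s : {malg Cl[K]}) :
  isDmod dF -> (forall u, dF (xi u) = - (c0 *: xi (sh u))) ->
  pair xi (\sum_(u <- msupp s) ((s@_u)^`() *: << u >> - (c0 * s@_u) *: << sh u >>))
  = dF (pair xi s).
Proof.
move=> [dFD dFZ] hL.
have dF0 : dF 0 = 0.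
  have := dFD 0 0; rewrite addr0.
  by move/(congr1 (fun x => x - dF 0)); rewrite subrr addrK => <-.
have dF_sum : forall (I : Type) (r : seq I) (g : I -> F),
    dF (\sum_(k <- r) g k) = \sum_(k <- r) dF (g k).
  move=> I r g; elim: r => [|x r IH]; first by rewrite !big_nil.
  by rewrite !big_cons dFD IH.
rewrite lin_sum; last exact: pair_lin.
rewrite {2}/pair dF_sum; apply: eq_bigr => u _.
rewrite linB; last exact: pair_lin.
rewrite (@linZ _ _ _ (pair_lin xi)) (@linZ _ _ _ (pair_lin xi)) !pairU dFZ hL.
by rewrite scalerN scalerA [c0 * _]mulrC.
Qed.

Lemma G3 (c : CC) (xi1 xi2 : K -> F) (s : {malg Cl[K]}) :
  pair (fun u => c%:P *: xi1 u + xi2 u) s = c%:P *: pair xi1 s + pair xi2 s.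
Proof.
rewrite /pair scaler_sumr -big_split /=.
by apply: eq_bigr => u _; rewrite scalerDr !scalerA mulrC.
Qed.

Lemma G6 (T : lmodType Cl) (f : K -> T) (k : K) :
  \sum_(u <- msupp (<< k >> : {malg Cl[K]})) << k >>@_u *: f u = f k.
Proof. by rewrite msuppU1' big_seq_fset1 mcoeffUU scale1r. Qed.

Lemma G7 (phi : {malg Cl[K]} -> F) (c0 : Cl) (sh : K -> K) (k : K) : linS phi ->
  phi (\sum_(u <- msupp (<< k >> : {malg Cl[K]}))
        (((<< k >> : {malg Cl[K]})@_u)^`() *: << u >> - (c0 * << k >>@_u) *: << sh u >>))
  = - (c0 *: phi << sh k >>).
Proof.
move=> h; rewrite msuppU1' big_seq_fset1 mcoeffUU mulr1 derivC scale0r sub0r.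
by rewrite -[- _]sub0r (@linB _ _ _ h) (@lin0 _ _ _ h) sub0r (@linZ _ _ _ h).
Qed.
End G.

Theorem proposition2p6 (n m : nat) (a : 'I_m -> 'rV[int]_n) (a0 : 'rV[int]_n)
  (l : 'I_m -> nat) (l0 : nat) :
  row_free (\matrix_(j < m) toR (a j)) ->
  (forall j, 0 < l j)%N -> (0 < l0)%N ->
  gcdn l0 (\big[gcdn/0%N]_(j < m) l j) = 1%N ->
  a0 *+ l0 = \sum_(j < m) a j *+ l j ->
  l0 = (\sum_(j < m) l j)%N ->
  forall (F : lmodType Cl) (dF : F -> F), isDmod dF ->
  [/\ (* the pairing sends K(F) into Hom_D(W, F) *)
      (forall xi : RF a F, inK a0 l l0 dF xi -> isDHom a0 l l0 dF (pairing xi)),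
      (* the induced map is C-linear *)
      (forall (c : CC) (xi1 xi2 : RF a F) (s : S a),
         pairing (fun u => c%:P *: xi1 u + xi2 u) s
         = c%:P *: pairing xi1 s + pairing xi2 s),
      (* injective *)
      (forall xi1 xi2 : RF a F, inK a0 l l0 dF xi1 -> inK a0 l l0 dF xi2 ->
         (forall s, pairing xi1 s = pairing xi2 s) -> forall u, xi1 u = xi2 u) &
      (* surjective *)
      (forall phi : S a -> F, isDHom a0 l l0 dF phi ->
         exists xi : RF a F, inK a0 l l0 dF xi /\ forall s, phi s = pairing xi s)].
Proof.
move=> _ _ _ _ _ _ F dF hdF.
split.
- move=> xi [hD hL]; split.
  + exact: pair_lin.
  + move=> i s; apply: G1; first exact: pair_lin.
    move=> u; have e := @Dbasis_phi _ _ _ _ _ _ a0 l l0 i u (pair_lin xi) (pairU xi).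
    exact: (etrans e (hD i u)).
  + move=> s; exact: G2.
- move=> c xi1 xi2 s; exact: G3.
- move=> xi1 xi2 _ _ h u.
  have e1 := pairU xi1 u; have e2 := pairU xi2 u.
  rewrite -e1 -e2; exact: h.
- move=> phi [hl hD hL]; exists (fun u => phi << u >>); split; last first.
    move=> s; exact: lin_pair.
  split.
  + move=> i v.
    have e := @Dbasis_phi _ _ _ _ _ _ a0 l l0 i v hl (fun u => erefl).
    rewrite -e.
    have e2 := @G6 _ _ (Dbasis a0 l l0 i) v.
    rewrite -e2; exact: hD i << v >>.
  + move=> u; rewrite -hL; exact: G7.
Qed.
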